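(* Let $q$ be a prime power, $s\geq1$, $n=q^{s-1}$, and let $\mathcal{RM}_q(1,s-1)$ be the first order $q$-ary Reed-Muller code. Its extended weight enumerator is \[ W_{\mathcal{RM}_q(1,s-1)}(X,Y,T)=\sum_{r=1}^{s}\left(\prod_{j=0}^{r-1}(T-q^j)\right)\begin{bmatrix} s-1\\ r-1\end{bmatrix}_q Y^n+\sum_{r=0}^{s-1}\left(\prod_{j=0}^{r-1}(T-q^j)\right)q^r\begin{bmatrix} s-1\\ r\end{bmatrix}_q X^{q^{s-1-r}}Y^{q^{s-1}-q^{s-1-r}}. \]
   Context: $\mathcal{RM}_q(1,s-1)$ is the linear $[q^{s-1},s]$ code over $\mathbb{F}_q$ generated by the matrix whose first row is all ones and whose columns, restricted to the remaining $s-1$ rows, run through all vectors of $\mathbb{F}_q^{s-1}$. For a linear $[n,k]$ code $C$ over $\mathbb{F}_q$ and $m\geq1$, the extension code $C\otimes\mathbb{F}_{q^m}$ is the $\mathbb{F}_{q^m}$-linear span of $C$ in $\mathbb{F}_{q^m}^n$. There are (uniquely determined) polynomials $A_w(T)\in\mathbb{Z}[T]$ with $A_w(q^m)$ equal to the number of words of Hamming weight $w$ in $C\otimes\mathbb{F}_{q^m}$ for all $m\geq1$; the extended weight enumerator is $W_C(X,Y,T)=\sum_{w=0}^nA_w(T)X^{n-w}Y^w$. $\begin{bmatrix} a\\ b\end{bmatrix}_q$ is the Gaussian binomial coefficient and the empty product equals $1$. *)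

(* Defs.v *)
From HB Require Import structures.
From mathcomp Require Import all_boot all_order all_algebra all_field.
From mathcomp Require Import mpoly.
Set Implicit Arguments. Unset Strict Implicit. Unset Printing Implicit Defensive.
Import Order.TTheory GRing.Theory Num.Theory.
Local Open Scope ring_scope.

Fixpoint qbinom (q a b : nat) {struct a} : nat :=
  match a with
  | 0 => if b is 0 then 1 else 0
  | a'.+1 => match b with
             | 0 => 1
             | b'.+1 => (qbinom q a' b' + q ^ b * qbinom q a' b)%N
             end
  end.

Definition hwt (L : fieldType) (N : nat) (c : 'rV[L]_N) : nat :=
  #|[set j : 'I_N | c 0 j != 0]|.

(* The extension code C (x) L of the code C over F generated by the rows of G,
   where F embeds into L via f: the L-linear span of the rows of G in L^N. *)
Definition ext_code (F L : finFieldType) (f : {rmorphism F -> L}) (k N : nat)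
  (G : 'M[F]_(k, N)) : {set 'rV[L]_N} :=
  [set a *m map_mx f G | a : 'rV[L]_k].

(* A : nat -> Z[T] are polynomials with A w (q^m) = number of words of weight w
   in C (x) F_{q^m} for all m >= 1 (q = |F|); F_{q^m} ranges over all finite
   fields of order q^m together with an embedding of F. *)
Definition ext_wt_polys (F : finFieldType) (k N : nat) (G : 'M[F]_(k, N))
  (A : nat -> {poly int}) : Prop :=
  forall m : nat, (0 < m)%N ->
  forall (L : finFieldType) (f : {rmorphism F -> L}), #|L| = (#|F| ^ m)%N ->
  forall w : nat,
    (A w).[(#|F| ^ m)%:R] = (#|[set c in ext_code f G | hwt c == w]|)%:R.

Definition ext_wt_enum (N : nat) (A : nat -> {poly int}) : {mpoly {poly int}[2]} :=
  \sum_(w < N.+1) (A w)%:MP * 'X_(0 : 'I_2) ^+ (N - w) * 'X_(1 : 'I_2) ^+ w.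

(* Generator matrix of RM_q(1, s-1): first row all ones, the columns restricted
   to the remaining s-1 rows run through all vectors of F^(s-1) (each once). *)
Definition RM_len (F : finFieldType) (s : nat) : nat := #|{: 'rV[F]_s.-1}|.

Definition RM_gen (F : finFieldType) (s : nat) : 'M[F]_(1 + s.-1, RM_len F s) :=
  col_mx (const_mx 1)
         (\matrix_(i < s.-1, j < RM_len F s) (enum_val j : 'rV[F]_s.-1) 0 i).

Definition fallq (q r : nat) : {poly int} := \prod_(j < r) ('X - (q ^ j)%:R%:P).

Definition RM_enum_formula (q s : nat) : {mpoly {poly int}[2]} :=
  \sum_(1 <= r < s.+1)
     (fallq q r * (qbinom q (s - 1) (r - 1))%:R%:P)%:MP
       * 'X_(1 : 'I_2) ^+ (q ^ (s - 1))
  + \sum_(0 <= r < s)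
     (fallq q r * ((q ^ r) * qbinom q (s - 1) r)%:R%:P)%:MP
       * 'X_(0 : 'I_2) ^+ (q ^ (s - 1 - r))
       * 'X_(1 : 'I_2) ^+ (q ^ (s - 1) - q ^ (s - 1 - r)).

(* Main.v *)
Require Import Defs.
From HB Require Import structures.
From mathcomp Require Import all_boot all_order all_algebra all_field.
From mathcomp Require Import mpoly.
From mathcomp Require Import all_fingroup all_solvable.
From mathcomp Require Import ring.
Set Implicit Arguments. Unset Strict Implicit. Unset Printing Implicit Defensive.
Import Order.TTheory GRing.Theory Num.Theory.
Local Open Scope ring_scope.

Lemma card_natr0 (F : finFieldType) : (#|F|%:R : F) = 0.
Proof.
pose e := exponent [set: F].
have he: e%:R == 0 :> F by rewrite -FinRing.zmodXgE expg_exponent // inE.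
have /dvdnP[c ->] : (e %| #|F|)%N by rewrite -cardsT exponent_dvdn.
by rewrite natrM (eqP he) mulr0.
Qed.

Lemma ext_exists (F : finFieldType) k : (0 < k)%N ->
  exists d : nat, (k <= d)%N /\
  exists (L : finFieldType) (f : {rmorphism F -> L}), #|L| = (#|F| ^ d)%N.
Proof.
move=> k_gt0; set m := (#|F| ^ k)%N.
have q_gt1 := finNzRing_gt1 F.
have m_gt1: (1 < m)%N by rewrite /m (ltn_exp2l 0).
have m_gt0 := ltnW m_gt1; have m1_gt0: (0 < m.-1)%N by rewrite -ltnS prednK.
pose q (R : nzRingType) : {poly R} := 'X^m - 'X.
have Dq R: q R = ('X^(m.-1) - 1) * ('X - 0).
  by rewrite subr0 mulrBl mul1r -exprSr prednK.
have /FinSplittingFieldFor[/= L splitLq]: q F != 0.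
  by rewrite Dq monic_neq0 ?rpredM ?monicXsubC ?monicXnsubC.
rewrite [map_poly _ _]rmorphB rmorphXn /= map_polyX -/(q L) in splitLq.
pose Fm := FinFieldExtType L.
exists (\dim {: L}); split; last first.
  exists Fm, (in_alg Fm).
  have := @card_vspace F (finvect_type L) (Vector.class _) fullv.
  have := @card_vspacef F (finvect_type L) (Vector.class _).
  move=> ->. by [].
have{splitLq} [zs DqL defL] := splitLq.
have mL0 : (m%:R : L) = 0.
  by rewrite /m natrX -(rmorph_nat (in_alg L)) card_natr0 rmorph0 expr0n gtn_eqF.
have Uzs: uniq zs.
  rewrite -separable_prod_XsubC -(eqp_separable DqL) Dq separable_root andbC.
  rewrite /root !hornerE subr_eq0 eq_sym expr0n gtn_eqF ?oner_eq0 //=.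
  rewrite cyclotomic.separable_Xn_sub_1 // -subn1 natrB // subr_eq0.
  by rewrite mL0 eq_sym oner_eq0.
have szs : size zs = m.
  apply: succn_inj; rewrite -(size_prod_XsubC _ id).
  by rewrite -(eqp_size DqL) size_polyDl size_polyXn // size_polyN size_polyX.
have : (m <= #|Fm|)%N.
  have Uzs' : uniq (zs : seq Fm) := Uzs.
  by rewrite -szs -(card_uniqP Uzs') max_card.
have := @card_vspace F (finvect_type L) (Vector.class _) fullv.
have := @card_vspacef F (finvect_type L) (Vector.class _).
move=> -> ->. by rewrite /m leq_exp2l.
Qed.

Lemma mem_leq_sumn (s : seq nat) x : x \in s -> (x <= sumn s)%N.
Proof.
elim: s => //= y s IH; rewrite inE => /orP[/eqP->|/IH]; first exact: leq_addr.
by move=> h; apply: leq_trans h (leq_addl _ _).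
Qed.

Lemma roots_inf (q : nat) (p : {poly int}) (P : nat -> Prop) : (1 < q)%N ->
  (forall M, exists d, (M <= d)%N /\ P d) ->
  (forall d, P d -> p.[(q ^ d)%:R] = 0) -> p = 0.
Proof.
move=> q1 hP hp.
have: forall n, exists ms : seq nat, [/\ size ms = n, uniq ms & forall d, d \in ms -> P d].
  elim=> [|n [ms [sz u a]]]; first by exists [::].
  have [d [le Pd]] := hP (sumn ms).+1.
  exists (d :: ms); split.
  - by rewrite /= sz.
  - rewrite /= u andbT; apply/negP => /mem_leq_sumn h.
    by move: (leq_trans le h); rewrite ltnn.
  - by move=> x; rewrite inE => /orP[/eqP->|/a].
move=> /(_ (size p)) [ms [sz u a]].
apply: (@roots_geq_poly_eq0 _ p (map (fun d => ((q ^ d)%:R : int)) ms)).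
- by apply/allP => x /mapP[d /a Pd ->]; apply/eqP; apply: hp.
- rewrite map_inj_uniq // => a1 b1 /eqP; rewrite eqr_nat => /eqP.
  exact: expnI.
- by rewrite size_map sz.
Qed.


Lemma sum_eq_nat (R : pzRingType) (N a : nat) (g : nat -> R) :
  \sum_(r < N) ((r : nat) == a)%:R * g r = (a < N)%:R * g a.
Proof.
elim: N => [|N IH]; first by rewrite big_ord0 mul0r.
rewrite big_ord_recr /= IH ltnS.
case: (ltngtP a N) => h.
- by rewrite mul0r addr0.
- by rewrite !mul0r addr0.
- by rewrite h mul0r add0r.
Qed.

Lemma card_if (T : finType) (I : {set T}) (b1 b2 : bool) :
  #|[set x | if x \in I then b1 else b2]| = (b1 * #|I| + b2 * #|~: I|)%N.
Proof.
rewrite -(cardsID I); congr (_ + _)%N.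
  case: b1; rewrite ?mul1n ?mul0n.
    by apply: eq_card => x; rewrite !inE; case: (x \in I); case: b2.
  apply/eqP; rewrite cards_eq0; apply/eqP/setP => x; rewrite !inE.
  by case: (x \in I); case: b2.
case: b2; rewrite ?mul1n ?mul0n.
  by apply: eq_card => x; rewrite !inE; case: (x \in I); case: b1.
apply/eqP; rewrite cards_eq0; apply/eqP/setP => x; rewrite !inE.
by case: (x \in I); case: b1.
Qed.


Lemma card_sum (T : finType) (P : pred T) :
  (\sum_(x : T) (P x : nat))%N = #|[set x | P x]|.
Proof.
rewrite -sum1_card [RHS]big_mkcond /=; apply: eq_bigr => x _; rewrite inE.
by case: (P x).
Qed.

Section Core.
Variables (F L : finFieldType) (f : {rmorphism F -> L}).

Definition phi k (a : 'rV[L]_k) (v : 'rV[F]_k) : L := \sum_i a 0 i * f (v 0 i).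
Definition Im k (a : 'rV[L]_k) : {set L} := [set phi a v | v : 'rV[F]_k].
Definition consv k (x : L) (a : 'rV[L]_k) : 'rV[L]_(1 + k) := row_mx (x%:M) a.

Lemma phiD k (a : 'rV[L]_k) v w : phi a (v + w) = phi a v + phi a w.
Proof. by rewrite /phi -big_split; apply: eq_bigr => i _; rewrite mxE rmorphD mulrDr. Qed.
Lemma phiZ k (a : 'rV[L]_k) c v : phi a (c *: v) = f c * phi a v.
Proof.
rewrite /phi mulr_sumr; apply: eq_bigr => i _; rewrite mxE rmorphM.
by rewrite mulrCA.
Qed.
Lemma phi0 k (a : 'rV[L]_k) : phi a 0 = 0.
Proof. by rewrite /phi big1 // => i _; rewrite mxE rmorph0 mulr0. Qed.
Lemma phiN k (a : 'rV[L]_k) v : phi a (- v) = - phi a v.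
Proof. by apply/eqP; rewrite -subr_eq0 opprK -phiD addNr phi0. Qed.

Lemma Im0 k (a : 'rV[L]_k) : 0 \in Im a.
Proof. by apply/imsetP; exists 0 => //; rewrite phi0. Qed.
Lemma ImD k (a : 'rV[L]_k) x y : x \in Im a -> y \in Im a -> x + y \in Im a.
Proof. by move=> /imsetP[v _ ->] /imsetP[w _ ->]; apply/imsetP; exists (v + w); rewrite ?phiD. Qed.
Lemma ImZ k (a : 'rV[L]_k) c x : x \in Im a -> f c * x \in Im a.
Proof. by move=> /imsetP[v _ ->]; apply/imsetP; exists (c *: v); rewrite ?phiZ. Qed.
Lemma ImN k (a : 'rV[L]_k) x : x \in Im a -> - x \in Im a.
Proof. by move=> /imsetP[v _ ->]; apply/imsetP; exists (- v); rewrite ?phiN. Qed.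
Lemma ImNE k (a : 'rV[L]_k) x : (- x \in Im a) = (x \in Im a).
Proof. by apply/idP/idP => /ImN //; rewrite opprK. Qed.

Lemma cons_surj k (a : 'rV[L]_(1 + k)) : a = consv (lsubmx a 0 0) (rsubmx a).
Proof. by rewrite /consv -mx11_scalar hsubmxK. Qed.

Lemma cons_inj k x y (a b : 'rV[L]_k) : consv x a = consv y b -> x = y /\ a = b.
Proof.
move=> /eq_row_mx [/matrixP /(_ 0 0)]; rewrite !mxE /= !mulr1n => -> ->; done.
Qed.

Lemma phi_cons k x (a : 'rV[L]_k) (v : 'rV[F]_(1 + k)) :
  phi (consv x a) v = x * f (v 0 0) + phi a (rsubmx v).
Proof.
rewrite /phi big_split_ord /= big_ord1; congr (_ + _).
  rewrite /consv row_mxEl mxE /= mulr1n.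
  by congr (_ * f (v 0 _)); apply: val_inj.
by apply: eq_bigr => i _; rewrite /consv row_mxEr mxE.
Qed.

Lemma Im_consP k x (a : 'rV[L]_k) y :
  reflect (exists t, y - x * f t \in Im a) (y \in Im (consv x a)).
Proof.
apply: (iffP imsetP) => [[v _ ->]|[t /imsetP[v _ Hv]]].
  by exists (v 0 0); rewrite phi_cons addrC addKr; apply/imsetP; exists (rsubmx v).
exists (row_mx (t%:M) v) => //; rewrite phi_cons row_mxKr.
rewrite (_ : row_mx _ _ _ _ = t); first by rewrite -Hv addrC subrK.
rewrite (_ : (0 : 'I_(1 + k)) = lshift k 0); last exact: val_inj.
by rewrite (row_mxEl (t%:M) v 0 0) mxE eqxx mulr1n.
Qed.


Lemma Im_cons_in k x (a : 'rV[L]_k) : x \in Im a -> Im (consv x a) = Im a.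
Proof.
move=> xI; apply/setP => y; apply/Im_consP/idP => [[t h]|yI].
  by rewrite -(subrK (x * f t) y) ImD // mulrC ImZ.
by exists 0; rewrite rmorph0 mulr0 subr0.
Qed.

Lemma Im_cons_out k x (a : 'rV[L]_k) :
  x \notin Im a -> #|Im (consv x a)| = (#|F| * #|Im a|)%N.
Proof.
move=> xI.
have -> : Im (consv x a) =
  [set x * f p.1 + p.2 | p in setX [set: F] (Im a)].
  apply/setP => y; apply/Im_consP/imsetP => [[t h]|[[t z]]].
    by exists (t, y - x * f t); rewrite ?inE //= addrC subrK.
  rewrite !inE /= => zI ->; exists t.
  by rewrite addrC addKr.
rewrite card_in_imset ?cardsX ?cardsT //.
move=> [t1 z1] [t2 z2]; rewrite !inE /= => z1I z2I E.
have Et : t1 = t2.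
  apply/eqP; apply: contraNT xI => ne.
  have hne : t1 - t2 != 0 by rewrite subr_eq0.
  have : x * f (t1 - t2) = z2 - z1.
    have -> : z2 = x * f t1 + z1 - x * f t2 by rewrite E addrAC subrr add0r.
    rewrite rmorphB; ring.
  move=> h; have := ImZ ((t1 - t2)^-1) (ImD z2I (ImN z1I)).
  by rewrite -h mulrC -mulrA -rmorphM mulrV ?unitfE // rmorph1 mulr1.
by move: E; rewrite Et => /addrI ->.
Qed.


Lemma cardsplit k (P : pred 'rV[L]_(1 + k)) :
  #|[set a | P a]| = (\sum_(a : 'rV[L]_k) #|[set x | P (consv x a)]|)%N.
Proof.
rewrite -sum1_card.
rewrite (reindex (fun p : 'rV[L]_k * L => consv p.2 p.1)) /=; last first.
  exists (fun a => (rsubmx a, lsubmx a 0 0)) => [[a x] _|a _] /=.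
    by rewrite /consv row_mxKr row_mxKl mxE eqxx mulr1n.
  exact: (esym (cons_surj a)).
rewrite -(pair_big_dep xpredT (fun a x => consv x a \in [set a | P a]) (fun _ _ => 1%N)) /=.
by apply: eq_bigr => a _; rewrite -sum1_card; apply: eq_bigl => x; rewrite !inE.
Qed.

Lemma Im_rank k (a : 'rV[L]_k) : exists2 r, (r <= k)%N & #|Im a| = (#|F| ^ r)%N.
Proof.
elim: k a => [|k IH] a.
  exists 0%N => //; rewrite expn0.
  have -> : Im a = [set 0].
    apply/setP => y; rewrite !inE; apply/imsetP/eqP => [[v _ ->]|->].
      by rewrite /phi big_ord0.
    by exists 0; rewrite ?phi0.
  by rewrite cards1.
rewrite [a](cons_surj (k := k) a).
have [r rk E] := IH (rsubmx (a : 'rV_(1 + k))).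
case: (boolP (lsubmx (a : 'rV_(1 + k)) 0 0 \in Im (rsubmx (a : 'rV_(1 + k))))) => h.
  by exists r; rewrite ?Im_cons_in // (leq_trans rk).
by exists r.+1; rewrite ?Im_cons_out // E expnS.
Qed.


Definition cnt k r := #|[set a : 'rV[L]_k | #|Im a| == (#|F| ^ r)%N]|.

Lemma decomp k N (G : nat -> int) : (k < N)%N ->
  \sum_(a : 'rV[L]_k) G #|Im a| = \sum_(r < N) (cnt k r)%:R * G (#|F| ^ r)%N.
Proof.
move=> kN; have q1 := finNzRing_gt1 F.
transitivity (\sum_(a : 'rV[L]_k) \sum_(r < N)
   ((#|Im a| == (#|F| ^ r)%N) : nat)%:R * G (#|F| ^ r)%N).
  apply: eq_bigr => a _; have [r0 r0k ->] := Im_rank a.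
  under eq_bigr => r _ do rewrite eqn_exp2l // eq_sym.
  rewrite (@sum_eq_nat _ N r0 (fun r => G (#|F| ^ r)%N)) /=.
  by rewrite (leq_ltn_trans r0k kN) mul1r.
rewrite exchange_big /=; apply: eq_bigr => r _.
by rewrite -mulr_suml -natr_sum card_sum.
Qed.


Lemma cnt0 r : cnt 0 r = (r == 0%N) :> nat.
Proof.
have E : forall a : 'rV[L]_0, #|Im a| = 1%N.
  move=> a; have [r0 r0k ->] := Im_rank a; by move: r0k; rewrite leqn0 => /eqP ->.
rewrite /cnt; have q1 := finNzRing_gt1 F.
rewrite (_ : [set a : 'rV[L]_0 | _] = if r == 0%N then setT else set0).
  by case: (r == 0%N); rewrite ?cardsT ?card_mx ?cards0.
have e1 : (1 == #|F| ^ r)%N = (r == 0%N).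
  by rewrite -{1}(expn0 #|F|) eqn_exp2l // eq_sym.
apply/setP => a; rewrite inE E e1.
by case: (r == 0%N); rewrite !inE.
Qed.

Definition fall r : int := \prod_(j < r) ((#|L|)%:R - (#|F| ^ j)%:R).

Lemma cnt_rec k R : (cnt k.+1 R)%:R = \sum_(r < (k + R).+1) (cnt k r)%:R *
   ((((r : nat) == R) : nat)%:R * (#|F| ^ r)%:R
     + ((r.+1 == R) : nat)%:R * ((#|L|)%:R - (#|F| ^ r)%:R)) :> int.
Proof.
have q1 := finNzRing_gt1 F.
rewrite /cnt (cardsplit (fun a => #|Im a| == (#|F| ^ R)%N)) natr_sum.
pose G (i : nat) : int := ((i == (#|F| ^ R)%N) : nat)%:R * i%:R
   + ((#|F| * i == #|F| ^ R)%N : nat)%:R * ((#|L|)%:R - i%:R).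
transitivity (\sum_(a : 'rV[L]_k) G #|Im a|).
  apply: eq_bigr => a _.
  rewrite (_ : [set x | _] = [set x | if x \in Im a then #|Im a| == (#|F| ^ R)%N
                 else (#|F| * #|Im a| == #|F| ^ R)%N]); last first.
    apply/setP => x; rewrite !inE; case: ifP => h.
      by rewrite Im_cons_in.
    by rewrite Im_cons_out ?h.
  rewrite card_if natrD !natrM /G; congr (_ + _ * _).
  by rewrite -(cardsC (Im a)) natrD addrAC subrr add0r.
rewrite (@decomp k (k + R).+1 G); last by rewrite ltnS leq_addr.
apply: eq_bigr => r _; rewrite /G; congr (_ * (_ * _ + _ * _)).
  by rewrite eqn_exp2l.
by rewrite -expnS eqn_exp2l.
Qed.

Lemma qbinom0 q k : qbinom q k 0 = 1%N.
Proof. by case: k. Qed.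

Lemma cnt_formula k r : (cnt k r)%:R = (qbinom #|F| k r)%:R * fall r :> int.
Proof.
elim: k r => [|k IH] R.
  rewrite cnt0; case: R => [|R] /=; first by rewrite /fall big_ord0 mulr1.
  by rewrite mul0r.
rewrite cnt_rec.
under eq_bigr => r _ do rewrite IH mulrDr.
rewrite big_split /=.
under eq_bigr => r _ do rewrite mulrCA.
rewrite (@sum_eq_nat _ _ R (fun r => (qbinom #|F| k r)%:R * fall r * (#|F| ^ r)%:R)).
rewrite ltnS leq_addl mul1r.
case: R => [|R].
  rewrite big1 ?addr0; last by move=> r _; rewrite mul0r mulr0.
  by rewrite !qbinom0 /fall big_ord0 expn0 !mul1r.
under eq_bigr => r _ do rewrite eqSS mulrCA.
rewrite (@sum_eq_nat _ _ R (fun r => (qbinom #|F| k r)%:R * fall r * ((#|L|)%:R - (#|F| ^ r)%:R))).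
rewrite ltnS (leq_trans (leqnSn R)) ?leq_addl // mul1r.
rewrite /fall big_ord_recr /= natrD natrM; ring.
Qed.


Lemma card_enum_val (T : finType) (P : pred T) :
  #|[set j : 'I_#|T| | P (enum_val j)]| = #|[set v : T | P v]|.
Proof.
rewrite -(card_imset _ enum_val_inj); apply: eq_card => v.
apply/imsetP/idP => [[j]|Pv]; first by rewrite !inE => Pj ->.
exists (enum_rank v).
  by move: Pv; rewrite !inE enum_rankK.
by rewrite enum_rankK.
Qed.

Lemma cw_entry k x (a : 'rV[L]_k) (v : 'rV[F]_k) :
  ((consv x a) *m map_mx f (RM_gen F k.+1)) 0 (enum_rank v) = x + phi a v.
Proof.
rewrite /consv /RM_gen map_col_mx mul_row_col mxE; congr (_ + _).
  by rewrite mul_scalar_mx !mxE rmorph1 mulr1.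
rewrite mxE /phi; apply: eq_bigr => i _; rewrite !mxE enum_rankK //.
Qed.

Lemma hwt_cw k x (a : 'rV[L]_k) :
  hwt ((consv x a) *m map_mx f (RM_gen F k.+1)) =
  #|[set v : 'rV[F]_k | x + phi a v != 0]|.
Proof.
rewrite /hwt -(card_enum_val (fun v : 'rV[F]_k => x + phi a v != 0)).
apply: eq_card => j; rewrite !inE -cw_entry enum_valK //.
Qed.

Lemma card_fiber k (a : 'rV[L]_k) y : y \in Im a ->
  #|[set v | phi a v == y]| = #|[set v | phi a v == 0]|.
Proof.
case/imsetP => v0 _ ->.
rewrite -(card_imset _ (addIr (- v0))); apply: eq_card => v.
apply/imsetP/idP => [[w]|]; rewrite !inE.
  by move=> /eqP E ->; rewrite phiD phiN E subrr.
by move=> /eqP E; exists (v + v0); rewrite ?addrK // inE phiD E add0r.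
Qed.

Lemma ker_im k (a : 'rV[L]_k) :
  (#|[set v | phi a v == 0%R]| * #|Im a|)%N = #|{: 'rV[F]_k}|.
Proof.
have -> : #|{: 'rV[F]_k}| = (\sum_(v : 'rV[F]_k) 1)%N by rewrite sum1_card.
rewrite (partition_big (phi a) (mem (Im a))) /=; last first.
  by move=> v _; apply/imsetP; exists v.
rewrite mulnC -sum_nat_const; apply: eq_bigr => y yI.
by rewrite -(card_fiber yI) -sum1_card; apply: eq_bigl => v; rewrite inE.
Qed.

Lemma zeros_cw k x (a : 'rV[L]_k) :
  #|[set v : 'rV[F]_k | x + phi a v == 0]| =
  if x \in Im a then (#|{: 'rV[F]_k}| %/ #|Im a|)%N else 0%N.
Proof.
have E : [set v : 'rV[F]_k | x + phi a v == 0] = [set v | phi a v == - x].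
  by apply/setP => v; rewrite !inE addrC addr_eq0.
rewrite E; case: ifP => h.
  rewrite card_fiber ?ImNE // -(ker_im a) mulnK // card_gt0.
  by apply/set0Pn; exists 0; apply: Im0.
apply/eqP; rewrite cards_eq0; apply/eqP/setP => v; rewrite !inE.
apply/negP => /eqP E'; move/negP: h; apply; rewrite -ImNE -E'.
by apply/imsetP; exists v.
Qed.

Lemma card_compl (T : finType) (P : pred T) :
  #|[set v : T | ~~ P v]| = (#|T| - #|[set v | P v]|)%N.
Proof.
rewrite -(cardsC [set v | P v]) addKn; apply: eq_card => v; rewrite !inE //.
Qed.

Definition Gw (n w : nat) (i : nat) : int :=
  ((n - n %/ i == w)%N : nat)%:R * i%:R + ((n == w) : nat)%:R * ((#|L|)%:R - i%:R).

Lemma count_w k w :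
  (#|[set a : 'rV[L]_(1 + k) | hwt (a *m map_mx f (RM_gen F k.+1)) == w]|)%:R =
  \sum_(r < k.+1) (cnt k r)%:R * Gw #|{: 'rV[F]_k}| w (#|F| ^ r)%N :> int.
Proof.
rewrite (cardsplit (fun a => hwt (a *m map_mx f (RM_gen F k.+1)) == w)) natr_sum.
rewrite -(@decomp k k.+1 (Gw #|{: 'rV[F]_k}| w)) //.
apply: eq_bigr => a _.
rewrite (_ : [set x | _] = [set x | if x \in Im a then
     (#|{: 'rV[F]_k}| - #|{: 'rV[F]_k}| %/ #|Im a| == w)%N else (#|{: 'rV[F]_k}| == w)]); last first.
  apply/setP => x; rewrite !inE hwt_cw card_compl zeros_cw.
  by case: ifP; rewrite ?subn0.
rewrite card_if natrD !natrM /Gw; congr (_ + _ * _).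
by rewrite -(cardsC (Im a)) natrD addrAC subrr add0r.
Qed.


Lemma phi_delta k (a : 'rV[L]_k) i : phi a (delta_mx 0 i) = a 0 i.
Proof.
rewrite /phi (bigD1 i) //= big1 ?addr0.
  by rewrite mxE !eqxx rmorph1 mulr1.
by move=> j ji; rewrite mxE eqxx /= (negbTE ji) rmorph0 mulr0.
Qed.

Lemma cw_inj k : injective (fun a : 'rV[L]_(1 + k) => a *m map_mx f (RM_gen F k.+1)).
Proof.
move=> a b /= E.
rewrite [a]cons_surj [b](cons_surj b).
have E' : forall v, lsubmx a 0 0 + phi (rsubmx a) v = lsubmx b 0 0 + phi (rsubmx b) v.
  move=> v; rewrite -!cw_entry -!cons_surj.
  by rewrite E.
have Ex := E' 0; rewrite !phi0 !addr0 in Ex.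
rewrite Ex; congr consv; apply/rowP => i.
by have := E' (delta_mx 0 i); rewrite Ex !phi_delta => /addrI.
Qed.

Lemma ext_count k w :
  #|[set c in ext_code f (RM_gen F k.+1) | hwt c == w]| =
  #|[set a : 'rV[L]_(1 + k) | hwt (a *m map_mx f (RM_gen F k.+1)) == w]|.
Proof.
rewrite -(card_imset _ (@cw_inj k)); apply: eq_card => c.
rewrite !inE; apply/andP/imsetP => [[/imsetP[a _ ->] h]|[a]].
  by exists a; rewrite ?inE.
rewrite inE => h ->; split => //; apply/imsetP; exists a => //.
Qed.

End Core.

Definition T1 (q k r : nat) : {poly int} :=
  fallq q r * ((q ^ r) * qbinom q k r)%:R%:P.
Definition T2 (q k r : nat) : {poly int} :=
  fallq q r.+1 * (qbinom q k r)%:R%:P.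
Definition Aw (q k w : nat) : {poly int} :=
  \sum_(r < k.+1) ((((w == q ^ k - q ^ (k - r))%N) : nat)%:R * T1 q k r
                  + ((w == q ^ k)%N : nat)%:R * T2 q k r).

Lemma fallq_eval q r x : (fallq q r).[x] = \prod_(j < r) (x - (q ^ j)%:R).
Proof. by rewrite /fallq horner_prod; apply: eq_bigr => j _; rewrite hornerXsubC. Qed.

Lemma Aw_eval (F L : finFieldType) (f : {rmorphism F -> L}) k w :
  (Aw #|F| k w).[(#|L|)%:R] =
  (#|[set c in ext_code f (RM_gen F k.+1) | hwt c == w]|)%:R.
Proof.
have q0 : (0 < #|F|)%N := ltnW (finNzRing_gt1 F).
rewrite ext_count count_w card_mx mul1n /Aw horner_sum.
apply: eq_bigr => r _; rewrite cnt_formula /Gw -expnB //; last by rewrite -ltnS.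
rewrite /T1 /T2 !hornerD !hornerM !hornerMn !hornerC !fallq_eval big_ord_recr /= /fall.
rewrite ?horner1 ![(w == _)]eq_sym !natrM; ring.
Qed.

Lemma sum_eq_ord (R : pzRingType) N (a : nat) (g : 'I_N -> R) (i0 : 'I_N) :
  nat_of_ord i0 = a -> \sum_(i < N) ((i : nat) == a)%:R * g i = g i0.
Proof.
move=> <-; rewrite (bigD1 i0) //= eqxx mul1r big1 ?addr0 // => i ne.
by rewrite (_ : (i : nat) == i0 = false) ?mul0r //; apply/negbTE.
Qed.

Lemma enum_Aw (F : finFieldType) k :
  ext_wt_enum (RM_len F k.+1) (Aw #|F| k) = RM_enum_formula #|F| k.+1.
Proof.
have q0 : (0 < #|F|)%N := ltnW (finNzRing_gt1 F).
rewrite /ext_wt_enum /RM_enum_formula /RM_len card_mx mul1n.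
set n := (#|F| ^ k)%N.
rewrite !subn1 /= big_add1 /= !big_mkord addrC.
under eq_bigr => w _ do rewrite /Aw rmorph_sum /= !mulr_suml.
rewrite exchange_big /=.
under eq_bigr => r _ do (under eq_bigr => w _ do rewrite rmorphD !rmorphM !rmorph_nat /= !mulrDl -!mulrA).
rewrite -big_split /=; apply: eq_bigr => r _.
rewrite big_split /=.
have le1 : ((#|F| ^ k - #|F| ^ (k - r)) < n.+1)%N by rewrite ltnS leq_subr.
rewrite (sum_eq_ord _ (i0 := inord (#|F| ^ k - #|F| ^ (k - r)))) ?inordK //.
rewrite (sum_eq_ord _ (i0 := inord n)) ?inordK //.
rewrite subnn expr0 mul1r /n subKn; last by rewrite leq_pexp2l // leq_subr.
rewrite subSS subn0 !rmorphM /= !rmorph_nat ?natrM; ring.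
Qed.

Unset Implicit Arguments.
Set Strict Implicit.

Theorem mainTheorem6 (F : finFieldType) (s : nat) :
  (1 <= s)%N ->
  (exists A : nat -> {poly int}, ext_wt_polys (RM_gen F s) A) /\
  (forall A : nat -> {poly int}, ext_wt_polys (RM_gen F s) A ->
     ext_wt_enum (RM_len F s) A = RM_enum_formula #|F| s).
Proof.
case: s => // k _.
have key : ext_wt_polys (RM_gen F k.+1) (Aw #|F| k).
  by move=> m m0 L f EL w; rewrite -EL (Aw_eval f).
split; first by exists (Aw #|F| k).
move=> A hA; rewrite -enum_Aw; apply: eq_bigr => w _; congr (_ * _ * _).
congr (_%:MP).
apply/eqP; rewrite -subr_eq0; apply/eqP.
apply: (@roots_inf #|F| _ (fun d => (0 < d)%N /\
   exists (L : finFieldType) (f : {rmorphism F -> L}), #|L| = (#|F| ^ d)%N)).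
- exact: finNzRing_gt1.
- move=> M; have [d [Md Ld]] := ext_exists F (ltn0Sn M).
  exists d; split; first exact: leq_trans (leqnSn M) Md.
  by split => //; apply: leq_trans Md.
- move=> d [d0 [L [f EL]]].
  by rewrite hornerD hornerN (hA d d0 L f EL w) (key d d0 L f EL w) subrr.
Qed.
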